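(* Let $k\ge 2$ and let $G=(V,E,w)$ be a $k$-colorable graph with positive vertex weights that is a $(k-1)$-stable instance of \texttt{MIS}. Then every optimal solution $x$ of the standard LP relaxation of \texttt{MIS} for $G$ that is half-integral ($x_u\in\{0,\tfrac12,1\}$ for all $u$) is integral, i.e. $x_u\in\{0,1\}$ for all $u\in V$ (and hence is the indicator vector of the maximum weight independent set).
   Context: \texttt{MIS}: given a graph $G=(V,E)$ with weights $w:V\to\mathbb{R}_{>0}$, find an independent set maximizing $w(I)=\sum_{u\in I}w_u$. The standard LP relaxation: maximize $\sum_{u\in V}w_ux_u$ subject to $x_u+x_v\le1$ for $(u,v)\in E$, $x_u\in[0,1]$ for $u\in V$ (it is known to always have a half-integral optimal solution). For $\gamma\ge1$, a $\gamma$-perturbation of $w$ is any $w':V\to\mathbb{R}$ with $w_u\le w'_u\le\gamma w_u$ for all $u$. The instance $G=(V,E,w)$ is $\gamma$-stable if it has a unique maximum weight independent set $I^*$ and $I^*$ remains the unique maximum weight independent set of $(V,E,w')$ for every $\gamma$-perturbation $w'$ of $w$. *)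

(* Defs.v *)
From HB Require Import structures.
From mathcomp Require Import all_boot all_order all_algebra.
Set Implicit Arguments. Unset Strict Implicit. Unset Printing Implicit Defensive.
Import Order.TTheory GRing.Theory Num.Theory.
Local Open Scope ring_scope.

Section MIS.
Variables (R : realFieldType) (T : finType).

Definition simple_graph (e : rel T) : Prop := symmetric e /\ irreflexive e.

Definition k_colorable (e : rel T) (k : nat) : Prop :=
  exists c : T -> 'I_k, forall u v, e u v -> c u != c v.

Definition independent (e : rel T) (I : {set T}) : Prop :=
  forall u v, u \in I -> v \in I -> ~~ e u v.

Definition set_weight (w : T -> R) (I : {set T}) : R := \sum_(u in I) w u.

Definition is_mwis (e : rel T) (w : T -> R) (I : {set T}) : Prop :=
  independent e I /\
  forall J : {set T}, independent e J -> set_weight w J <= set_weight w I.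

Definition unique_mwis (e : rel T) (w : T -> R) (I : {set T}) : Prop :=
  is_mwis e w I /\ forall J : {set T}, is_mwis e w J -> J = I.

Definition perturbation (gamma : R) (w w' : T -> R) : Prop :=
  forall u, w u <= w' u <= gamma * w u.

Definition stable (e : rel T) (gamma : R) (w : T -> R) : Prop :=
  exists Istar : {set T},
    unique_mwis e w Istar /\
    forall w' : T -> R, perturbation gamma w w' -> unique_mwis e w' Istar.

Definition lp_feasible (e : rel T) (x : T -> R) : Prop :=
  (forall u, 0 <= x u <= 1) /\ (forall u v, e u v -> x u + x v <= 1).

Definition lp_value (w x : T -> R) : R := \sum_(u : T) w u * x u.

Definition lp_optimal (e : rel T) (w x : T -> R) : Prop :=
  lp_feasible e x /\
  forall y : T -> R, lp_feasible e y -> lp_value w y <= lp_value w x.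

Definition half_integral (x : T -> R) : Prop :=
  forall u, x u = 0 \/ x u = 2^-1 \/ x u = 1.

Definition integral (x : T -> R) : Prop :=
  forall u, x u = 0 \/ x u = 1.

End MIS.

(* Main.v *)
Require Import Defs.
From HB Require Import structures.
From mathcomp Require Import all_boot all_order all_algebra.
From mathcomp Require Import ring lra.
Import Order.TTheory GRing.Theory Num.Theory.
Local Open Scope ring_scope.

Lemma sum_if_eq (R : nzRingType) k (j : 'I_k) (a b : R) :
  \sum_(i < k) (if j == i then a else b) = a + b *+ k.-1.
Proof.
rewrite (bigD1 j) //= eqxx; congr (_ + _).
rewrite (eq_bigr (fun _ => b)); last by move=> i; rewrite eq_sym => /negbTE ->.
by rewrite sumr_const cardC1 card_ord.
Qed.

Lemma sum_const_ord (R : nzRingType) k (a : R) : \sum_(i < k) a = a *+ k.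
Proof. by rewrite sumr_const card_ord. Qed.

Lemma stab_ineq {R : realFieldType} {T : finType} {e : rel T} {w : T -> R}
  {g : R} {I : {set T}} :
  1 <= g -> (forall u, 0 < w u) ->
  (forall w' : T -> R, perturbation g w w' -> unique_mwis e w' I) ->
  forall J : {set T}, independent e J ->
  \sum_u (if (u \in J) && (u \notin I) then g * w u else 0)
   <= \sum_u (if (u \in I) && (u \notin J) then w u else 0)
  /\ (J != I -> \sum_u (if (u \in J) && (u \notin I) then g * w u else 0)
   < \sum_u (if (u \in I) && (u \notin J) then w u else 0)).
Proof.
move=> g1 wpos Hp J HJ.
pose w' := fun u => if (u \in J) && (u \notin I) then g * w u else w u.
have Hw' : perturbation g w w'.
  move=> u; rewrite /w'; have := wpos u => wu.
  case: ifP => _; apply/andP; split; nra.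
have [[_ Hmax] Huniq] := Hp w' Hw'.
have HI : set_weight w' I = \sum_u (if u \in I then w' u else 0).
  by rewrite /set_weight big_mkcond.
have HJw : set_weight w' J = \sum_u (if u \in J then w' u else 0).
  by rewrite /set_weight big_mkcond.
have E : \sum_u (if u \in I then w' u else 0) - \sum_u (if u \in J then w' u else 0)
  = \sum_u (if (u \in I) && (u \notin J) then w u else 0)
    - \sum_u (if (u \in J) && (u \notin I) then g * w u else 0).
  rewrite -!sumrB; apply: eq_bigr => u _; rewrite /w'.
  by case: (u \in I); case: (u \in J) => /=; ring.
have Hle := Hmax J HJ.
split; first by lra.
move=> HneJ; rewrite ltNge; apply/negP => H.
have HmJ : is_mwis e w' J.
  split=> // J' HJ'; have := Hmax J' HJ'; lra.
by move: HneJ; rewrite (Huniq J HmJ) eqxx.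
Qed.

Theorem mainTheorem2 (R : realFieldType) (T : finType) (e : rel T)
  (w : T -> R) (k : nat) :
  (2 <= k)%N ->
  simple_graph e ->
  k_colorable e k ->
  (forall u, 0 < w u) ->
  stable e (k.-1)%:R w ->
  forall x : T -> R, lp_optimal e w x -> half_integral x -> integral x.
Proof.
move=> k2 [esym eirr] [c Hc] wpos [I [[[HIind HImax] HIuniq] Hp]] x
  [[x01 xedge] xopt] xhalf u0.
case: (xhalf u0) => [->|[Hh|->]]; [by left| |by right].
exfalso.
set g : R := (k.-1)%:R.
have hk1 : (1 <= k.-1)%N by rewrite -ltnS prednK // ltnW.
have g1 : 1 <= g by rewrite /g ler1n.
have kg : (k%:R : R) = g + 1 by rewrite /g natr1 prednK // ltnW.
have hpos : 0 < (2:R)^-1 by rewrite invr_gt0.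
have hsum : (2:R)^-1 + 2^-1 = 1.
  by lra.
have z1 : ((0:R) == 1) = false by apply/eqP; lra.
have zh : ((0:R) == 2^-1) = false by apply/eqP; lra.
have h1 : ((2:R)^-1 == 1) = false by apply/eqP; lra.
have oh : ((1:R) == 2^-1) = false by apply/eqP; lra.
pose J (i : 'I_k) := [set u | (x u == 1) || ((x u == 2^-1) && (c u == i))].
have Jind : forall i, independent e (J i).
  move=> i u v; rewrite !inE => Hu Hv; apply/negP => euv.
  have := xedge u v euv.
  case/orP: Hu => [/eqP xu1 | /andP [/eqP xuh /eqP cu]];
  case/orP: Hv => [/eqP xv1 | /andP [/eqP xvh /eqP cv]].
  - lra.
  - lra.
  - lra.
  - by move: (Hc u v euv); rewrite cu cv eqxx.
have HS i := stab_ineq g1 wpos Hp _ (Jind i).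
have [i0 Hi0] : exists i0, J i0 != I.
  case E0: (J (c u0) == I); last by exists (c u0); rewrite E0.
  have [i1 Hi1] : exists i1 : 'I_k, i1 != c u0.
    have o0 : (0 < k)%N by apply: leq_trans k2.
    case E: (Ordinal o0 == c u0); last by exists (Ordinal o0); rewrite E.
    exists (Ordinal k2); move/eqP: E => <-; done.
  exists i1; apply/negP => /eqP EJ.
  have : u0 \in J (c u0) by rewrite inE Hh !eqxx orbT.
  rewrite (eqP E0) -EJ inE Hh h1 eqxx /=.
  by rewrite eq_sym (negbTE Hi1).
have Hlt : \sum_(i < k) \sum_u (if (u \in J i) && (u \notin I) then g * w u else 0)
  < \sum_(i < k) \sum_u (if (u \in I) && (u \notin J i) then w u else 0).
  rewrite (bigD1 i0) //= [X in _ < X](bigD1 i0) //=.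
  apply: ltr_leD; first exact: (HS i0).2 Hi0.
  by apply: ler_sum => i _; exact: (HS i).1.
rewrite exchange_big [X in _ < X]exchange_big /= in Hlt.
have HB1 : forall u, 2 * g * (if u \in I then 0 else w u * x u) <=
    \sum_(i < k) (if (u \in J i) && (u \notin I) then g * w u else 0).
  move=> u.
  rewrite (eq_bigr (fun i => if (u \notin I) && ((x u == 1) || ((x u == 2^-1) && (c u == i))) then g * w u else 0)); last by move=> i _; rewrite inE andbC.
  have wu := wpos u.
  case: (xhalf u) => [-> | [-> | ->]]; case: (u \in I);
    rewrite /= ?z1 ?zh ?h1 ?eqxx /= ?sum_const_ord ?mul0rn.
  - nra.
  - nra.
  - nra.
  - rewrite sum_if_eq mul0rn; nra.
  - nra.
  - rewrite -[_ *+ k]mulr_natl kg; have gw : 0 < g * w u by nra. nra.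
have HB2 : forall u, \sum_(i < k) (if (u \in I) && (u \notin J i) then w u else 0)
    <= 2 * g * (if u \in I then w u * (1 - x u) else 0).
  move=> u.
  rewrite (eq_bigr (fun i => if (u \in I) && ~~ ((x u == 1) || ((x u == 2^-1) && (c u == i))) then w u else 0)); last by move=> i _; rewrite inE.
  have wu := wpos u.
  case: (xhalf u) => [-> | [-> | ->]]; case: (u \in I);
    rewrite /= ?z1 ?zh ?h1 ?eqxx /= ?sum_const_ord ?mul0rn.
  - rewrite -[_ *+ k]mulr_natl kg; nra.
  - nra.
  - rewrite (eq_bigr (fun i => if c u == i then 0 else w u)); last by move=> i _; rewrite if_neg.
    rewrite sum_if_eq -mulr_natl -/g; nra.
  - nra.
  - nra.
  - nra.
have S1 := @ler_sum _ _ (index_enum T) xpredT _ _ (fun u _ => HB1 u).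
have S2 := @ler_sum _ _ (index_enum T) xpredT _ _ (fun u _ => HB2 u).
have := lt_le_trans (le_lt_trans S1 Hlt) S2.
have g2 : 0 < 2 * g by lra.
rewrite -!mulr_sumr ltr_pM2l // => Hfin.
have Hfeas : lp_feasible e (fun u => if u \in I then (1:R) else 0).
  split.
    by move=> u; case: (u \in I); rewrite ?ler01 ?lexx.
  move=> u v euv; have := HIind u v.
  case: (u \in I); case: (v \in I) => /= H;
    rewrite ?addr0 ?add0r ?ler01 ?lexx //.
  by move: (H erefl erefl); rewrite euv.
have Hopt := xopt _ Hfeas; rewrite /lp_value in Hopt.
have E : \sum_u w u * (if u \in I then 1 else 0) - \sum_u w u * x u
  = \sum_u (if u \in I then w u * (1 - x u) else 0)
    - \sum_u (if u \in I then 0 else w u * x u).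
  rewrite -!sumrB; apply: eq_bigr => u _.
  by case: (u \in I); ring.
have : 0 < \sum_u w u * (if u \in I then 1 else 0) - \sum_u w u * x u.
  by rewrite E subr_gt0.
rewrite subr_gt0 => H.
by move: Hopt; rewrite /= leNgt H.
Qed.
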